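(* Let $T$ be a $d$-ary tree with $n$ leaves and let $1\le k<\ell\le n$. For $m\ge 1$ let $A^{(m)}$ be the tree obtained from $T$ by attaching a $d$-ary caret at the $k$-th leaf $m$ times in succession (so $A^{(1)}=T_k$, $A^{(j+1)}=(A^{(j)})_k$), and let $B^{(1)}=T_\ell$ and $B^{(j+1)}=(B^{(j)})_{\ell+j(d-1)}$. Then in $F_d$, $[T_k,T_\ell]^m=[A^{(m)},B^{(m)}]$ for every $m\in\mathbb{N}$.
   Context: Fix $d\ge 2$. A $d$-ary tree is a finite rooted tree in which each non-leaf vertex has exactly $d$ ordered children; leaves are numbered $1,\dots,n$ left to right. For $1\le k\le n(T)$, $T_k$ denotes $T$ with a $d$-ary caret (root with $d$ leaf children) attached to its $k$-th leaf. The Higman–Thompson group $F_d$ consists of classes $[T,U]$ of pairs of $d$-ary trees with the same number $n$ of leaves, under the equivalence generated by $(T,U)\sim(T_k,U_k)$ for $1\le k\le n$, with product $[T,U][U,W]=[T,W]$. *)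

(* Defs.v *)
From mathcomp Require Import all_boot.
Set Implicit Arguments.
Unset Strict Implicit.
Unset Printing Implicit Defensive.

Inductive tree : Type := Lf | Nd of list tree.

Fixpoint nleaves (t : tree) : nat :=
  match t with
  | Lf => 1
  | Nd cs => (fix go (l : list tree) : nat :=
               match l with nil => 0 | c :: r => nleaves c + go r end) cs
  end.

Fixpoint dary (d : nat) (t : tree) : bool :=
  match t with
  | Lf => true
  | Nd cs => (size cs == d) &&
             (fix go (l : list tree) : bool :=
                match l with nil => true | c :: r => dary d c && go r end) cs
  end.

Definition caret (d : nat) : tree := Nd (nseq d Lf).

(* attach a d-ary caret at the leaf with 0-based index i (left to right) *)
Fixpoint graft0 (d : nat) (t : tree) (i : nat) : tree :=
  match t with
  | Lf => if i == 0 then caret d else Lf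
  | Nd cs => Nd ((fix go (l : list tree) (j : nat) : list tree :=
                   match l with
                   | nil => nil
                   | c :: r => if j < nleaves c then graft0 d c j :: r
                               else c :: go r (j - nleaves c)
                   end) cs i)
  end.

(* T_k : attach a d-ary caret at the k-th leaf (leaves numbered 1..n) *)
Definition expand (d : nat) (T : tree) (k : nat) : tree := graft0 d T k.-1.

Definition valid_pair (d : nat) (p : tree * tree) : Prop :=
  dary d p.1 /\ dary d p.2 /\ nleaves p.1 = nleaves p.2.

Inductive pequiv (d : nat) : tree * tree -> tree * tree -> Prop :=
  | pequiv_refl p : valid_pair d p -> pequiv d p p
  | pequiv_step T U k : valid_pair d (T, U) -> 1 <= k <= nleaves T ->
      pequiv d (T, U) (expand d T k, expand d U k)
  | pequiv_sym p q : pequiv d p q -> pequiv d q p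
  | pequiv_trans p q r : pequiv d p q -> pequiv d q r -> pequiv d p r.

(* Elements of F_d are represented as equivalence classes, i.e. sets of pairs. *)
Definition Fd_elt := tree * tree -> Prop.

Definition cls (d : nat) (T U : tree) : Fd_elt := fun p => pequiv d p (T, U).

Definition Fd_mul (d : nat) (x y : Fd_elt) : Fd_elt :=
  fun p => exists X Y Z, x (X, Y) /\ y (Y, Z) /\ pequiv d p (X, Z).

Definition Fd_one (d : nat) : Fd_elt :=
  fun p => exists X, dary d X /\ pequiv d p (X, X).

Fixpoint Fd_pow (d : nat) (x : Fd_elt) (m : nat) : Fd_elt :=
  match m with 0 => Fd_one d | m'.+1 => Fd_mul d x (Fd_pow d x m') end.

Definition Fd_eq (x y : Fd_elt) : Prop := forall p, x p <-> y p.

Fixpoint treeA (d : nat) (T : tree) (k j : nat) : tree :=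
  match j with 0 => T | j'.+1 => expand d (treeA d T k j') k end.

Fixpoint treeB (d : nat) (T : tree) (l j : nat) : tree :=
  match j with 0 => T | j'.+1 => expand d (treeB d T l j') (l + j' * (d - 1)) end.

(* Main.v *)
Require Import Defs.
From mathcomp Require Import all_boot zify.
Set Implicit Arguments.
Unset Strict Implicit.

Notation nl := nleaves.

Definition tree_ind2 (P : tree -> Prop) (HL : P Lf)
  (HN : forall cs, foldr (fun c acc => P c /\ acc) True cs -> P (Nd cs)) :
  forall t, P t :=
  fix f t := match t with
  | Lf => HL
  | Nd cs => HN cs ((fix g l : foldr (fun c acc => P c /\ acc) True l :=
                 match l with nil => I | c :: r => conj (f c) (g r) end) cs)
  end.

Fixpoint subst (t : tree) (F : seq tree) : tree :=
  match t with
  | Lf => head Lf F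
  | Nd cs => Nd ((fix go (l : seq tree) (F : seq tree) : seq tree :=
       match l with nil => nil
       | c :: r => subst c (take (nleaves c) F) :: go r (drop (nleaves c) F) end) cs F)
  end.

Fixpoint fcomp (l : seq tree) (F : seq tree) : seq tree :=
  match l with nil => nil
  | c :: r => subst c (take (nleaves c) F) :: fcomp r (drop (nleaves c) F) end.

Fixpoint graftl (d : nat) (l : seq tree) (j : nat) : seq tree :=
  match l with
  | nil => nil
  | c :: r => if j < nleaves c then graft0 d c j :: r
              else c :: graftl d r (j - nleaves c)
  end.

Lemma subst_Nd cs F : subst (Nd cs) F = Nd (fcomp cs F).
Proof. rewrite /=; congr Nd; elim: cs F => //= c r IH F; by rewrite IH. Qed.

Lemma graft0_Nd d cs i : graft0 d (Nd cs) i = Nd (graftl d cs i).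
Proof. rewrite /=; congr Nd; elim: cs i => //= c r IH i; by rewrite IH. Qed.

Lemma nl_Nd cs : nl (Nd cs) = sumn (map nl cs).
Proof. elim: cs => [//|c r IH] /=; by rewrite -IH. Qed.

Lemma dary_Nd d cs : dary d (Nd cs) = (size cs == d) && all (dary d) cs.
Proof. rewrite /=; congr andb; by elim: cs => //= c r ->. Qed.

Lemma size_fcomp l F : size (fcomp l F) = size l.
Proof. by elim: l F => //= c r IH F; rewrite IH. Qed.

Lemma fcomp_cat G1 G2 H :
  fcomp (G1 ++ G2) H = fcomp G1 (take (sumn (map nl G1)) H) ++ fcomp G2 (drop (sumn (map nl G1)) H).
Proof.
elim: G1 H => [|g G1 IH] H /=; first by rewrite drop0.
rewrite IH take_takel ?leq_addr //; congr (_ :: _ ++ _).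
  by rewrite take_drop addnC.
by rewrite drop_drop addnC.
Qed.

Lemma nl_subst t F : size F = nl t -> nl (subst t F) = sumn (map nl F).
Proof.
elim/tree_ind2: t F => [|cs IHcs] F.
  by case: F => [|a [|]] //= _; rewrite addn0.
rewrite subst_Nd !nl_Nd => HF.
elim: cs IHcs F HF => [|c r IH] /=; first by move=> _ [].
move=> [IHc IHr] F HF.
rewrite IHc ?size_takel ?HF ?leq_addr // IH //; last by rewrite size_drop HF addKn.
by rewrite -sumn_cat -map_cat cat_take_drop.
Qed.

Lemma dary_subst d t F : dary d t -> all (dary d) F -> dary d (subst t F).
Proof.
elim/tree_ind2: t F => [|cs IHcs] F.
  by case: F => [|a l] //= _ /andP[].
rewrite subst_Nd !dary_Nd size_fcomp => /andP[-> Hcs] HF /=.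
elim: cs IHcs F Hcs HF => [|c r IH] //= [IHc IHr] F /andP[Hc Hr] HF.
rewrite IHc ?IH //.
  by move: HF; rewrite -{1}(cat_take_drop (nl c) F) all_cat => /andP[].
by move: HF; rewrite -{1}(cat_take_drop (nl c) F) all_cat => /andP[].
Qed.

Lemma subst_id t : subst t (nseq (nl t) Lf) = t.
Proof.
elim/tree_ind2: t => [//|cs IHcs].
rewrite subst_Nd nl_Nd; congr Nd.
elim: cs IHcs => [|c r IH] //= [IHc IHr].
rewrite take_nseq ?leq_addr // drop_nseq addKn IHc IH //.
Qed.

Lemma fcomp_id cs : fcomp cs (nseq (sumn (map nl cs)) Lf) = cs.
Proof. by have := subst_id (Nd cs); rewrite subst_Nd nl_Nd => [[]]. Qed.

Lemma fcomp_nseqLf a Y : size Y = a -> fcomp (nseq a Lf) Y = Y.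
Proof.
elim: a Y => [|a IH] [|y Y] //= [HY].
by rewrite drop0 IH.
Qed.

Lemma subst_assoc t G H : size G = nl t -> size H = sumn (map nl G) ->
  subst (subst t G) H = subst t (fcomp G H).
Proof.
elim/tree_ind2: t G H => [|cs IHcs] G H.
  case: G => [|g [|]] //= _; rewrite addn0 => HH.
  by rewrite take_oversize ?HH.
rewrite !subst_Nd nl_Nd => HG HH; congr Nd.
elim: cs IHcs G H HG HH => [|c r IH] /=; first by move=> _ [].
move=> [IHc IHr] G H HG HH.
have HG1 : size (take (nl c) G) = nl c by rewrite size_takel // HG leq_addr.
have E : G = take (nl c) G ++ drop (nl c) G by rewrite cat_take_drop.
have HH1 : sumn (map nl (take (nl c) G)) <= size H.
  by rewrite HH {2}E map_cat sumn_cat leq_addr.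
rewrite [in RHS]E fcomp_cat take_size_cat ?size_fcomp //.
rewrite drop_size_cat ?size_fcomp //.
rewrite nl_subst // IHc //; last by rewrite size_takel.
rewrite IH //; first by rewrite size_drop HG addKn.
by rewrite size_drop HH {1}E map_cat sumn_cat addKn.
Qed.

Lemma fcomp_assoc cs G H : size G = sumn (map nl cs) -> size H = sumn (map nl G) ->
  fcomp (fcomp cs G) H = fcomp cs (fcomp G H).
Proof.
move=> HG HH; have := subst_assoc (t := Nd cs) (G := G) (H := H).
by rewrite !subst_Nd nl_Nd => /(_ HG HH) [].
Qed.

Lemma subst_inj t A B : size A = nl t -> size B = nl t -> subst t A = subst t B -> A = B.
Proof.
elim/tree_ind2: t A B => [|cs IHcs] A B.
  by case: A => [|a [|]] //; case: B => [|b [|]] //= _ _ ->.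
rewrite !subst_Nd nl_Nd => HA HB [].
elim: cs IHcs A B HA HB => [|c r IH] /=.
  by move=> _ [|] // [|].
move=> [IHc IHr] A B HA HB [E1 E2].
rewrite -(cat_take_drop (nl c) A) -(cat_take_drop (nl c) B).
congr (_ ++ _).
  by apply: IHc => //; rewrite size_takel // ?HA ?HB leq_addr.
by apply: IH => //; rewrite size_drop ?HA ?HB addKn.
Qed.

Definition CR d a b := exists H1 H2, all (dary d) H1 /\ all (dary d) H2 /\
  size H1 = nl a /\ size H2 = nl b /\ subst a H1 = subst b H2.

Definition CRl d cs ds := exists H1 H2, all (dary d) H1 /\ all (dary d) H2 /\
  size H1 = sumn (map nl cs) /\ size H2 = sumn (map nl ds) /\ fcomp cs H1 = fcomp ds H2.

Lemma all_nseqLf d n : all (dary d) (nseq n Lf).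
Proof. by elim: n. Qed.

Lemma CRl_cons d c cs e ds : CR d c e -> CRl d cs ds -> CRl d (c :: cs) (e :: ds).
Proof.
move=> [h1 [h2 [A1 [A2 [S1 [S2 E]]]]]] [K1 [K2 [B1 [B2 [T1 [T2 F]]]]]].
exists (h1 ++ K1), (h2 ++ K2); rewrite !all_cat A1 A2 B1 B2 !size_cat S1 S2 T1 T2.
do 4! split => //=.
by rewrite !take_size_cat // !drop_size_cat // E F.
Qed.

Lemma CRl_gen d cs ds :
  foldr (fun c acc => (forall b, dary d c -> dary d b -> CR d c b) /\ acc) True cs ->
  all (dary d) cs -> all (dary d) ds -> size cs = size ds -> CRl d cs ds.
Proof.
elim: cs ds => [|c cs IH] [|e ds] //=.
  by move=> *; exists [::], [::].
move=> [Hc Hcs] /andP[dc dcs] /andP[de dds] [Hs].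
by apply: CRl_cons; [apply: Hc | apply: IH].
Qed.

Lemma CR_all d a b : dary d a -> dary d b -> CR d a b.
Proof.
elim/tree_ind2: a b => [|cs IHcs] b da db.
  exists [:: b], (nseq (nl b) Lf); rewrite /= db all_nseqLf size_nseq subst_id //.
case: b db => [|ds] db.
  have da' : all (dary d) [:: Nd cs] by apply/andP; split.
  exists (nseq (nl (Nd cs)) Lf), [:: Nd cs]; rewrite da' all_nseqLf size_nseq subst_id //.
move: da db; rewrite !dary_Nd => /andP[/eqP sc dcs] /andP[/eqP sd dds].
have [H1 [H2 [A1 [A2 [S1 [S2 E]]]]]] := CRl_gen IHcs dcs dds (etrans sc (esym sd)).
exists H1, H2; rewrite !subst_Nd !nl_Nd E; do 4! split => //.
Qed.

Lemma foldr_all (P : tree -> Prop) cs : (forall t, P t) -> foldr (fun c acc => P c /\ acc) True cs.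
Proof. by move=> H; elim: cs => //= c r ->. Qed.

Lemma CRl_all d cs ds : all (dary d) cs -> all (dary d) ds -> size cs = size ds -> CRl d cs ds.
Proof. apply: CRl_gen; apply: foldr_all => t b; exact: CR_all. Qed.

Definition stepF d n i := nseq i Lf ++ caret d :: nseq (n - i.+1) Lf.

Lemma sumn_nseqLf k : sumn (map nl (nseq k Lf)) = k.
Proof. by elim: k => //= k ->. Qed.

Lemma sumn_cons c l : sumn (map nl (c :: l)) = nl c + sumn (map nl l).
Proof. by []. Qed.

Lemma fcomp_cons c l F : fcomp (c :: l) F = subst c (take (nl c) F) :: fcomp l (drop (nl c) F).
Proof. by []. Qed.

Lemma nl_caret d : nl (caret d) = d.
Proof. by rewrite /caret nl_Nd sumn_nseqLf. Qed.

Lemma dary_caret d : dary d (caret d).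
Proof. by rewrite /caret dary_Nd size_nseq eqxx all_nseqLf. Qed.

Lemma size_stepF d n i : i < n -> size (stepF d n i) = n.
Proof. rewrite /stepF size_cat /= !size_nseq; lia. Qed.

Lemma sumn_stepF d n i : i < n -> sumn (map nl (stepF d n i)) = n + d - 1.
Proof.
move=> H; rewrite /stepF map_cat sumn_cat sumn_cons !sumn_nseqLf nl_caret.
have := leq0n d; lia.
Qed.

Lemma all_stepF d n i : all (dary d) (stepF d n i).
Proof. rewrite /stepF all_cat all_nseqLf; apply/andP; split=> //; apply/andP; split; [exact: dary_caret | exact: all_nseqLf]. Qed.

Lemma stepF_split1 d a b i : i < a -> stepF d (a + b) i = stepF d a i ++ nseq b Lf.
Proof.
move=> H; rewrite /stepF -catA /= -nseqD.
by have -> : a + b - i.+1 = a - i.+1 + b by lia.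
Qed.

Lemma stepF_split2 d a b i : a <= i -> stepF d (a + b) i = nseq a Lf ++ stepF d b (i - a).
Proof.
move=> H; rewrite /stepF catA -nseqD.
have -> : a + (i - a) = i by lia.
by have -> : a + b - i.+1 = b - (i - a).+1 by lia.
Qed.

Lemma graft_subst d t i : i < nl t -> graft0 d t i = subst t (stepF d (nl t) i).
Proof.
elim/tree_ind2: t i => [|cs IHcs] i.
  by case: i.
rewrite graft0_Nd subst_Nd nl_Nd => Hi; congr Nd.
elim: cs IHcs i Hi => [|c r IH] //= [IHc IHr] i Hi.
case: ifP => Hic.
  rewrite stepF_split1 // take_size_cat ?size_stepF // drop_size_cat ?size_stepF //.
  by rewrite fcomp_id (IHc _ Hic).
rewrite stepF_split2; last by rewrite leqNgt Hic.
rewrite (take_size_cat _ (size_nseq _ _)) (drop_size_cat _ (size_nseq _ _)) subst_id IH //; lia.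
Qed.

Lemma nl_graft d t i : i < nl t -> nl (graft0 d t i) = nl t + d - 1.
Proof. by move=> H; rewrite graft_subst // nl_subst ?size_stepF // sumn_stepF. Qed.

Lemma dary_graft d t i : dary d t -> i < nl t -> dary d (graft0 d t i).
Proof. by move=> Ht H; rewrite graft_subst // dary_subst // all_stepF. Qed.

Lemma fcomp_stepF d n i X : 0 < d -> i < n -> size X = n + d - 1 ->
  fcomp (stepF d n i) X = take i X ++ Nd (take d (drop i X)) :: drop (i + d) X.
Proof.
move=> Hd Hi HX; rewrite /stepF fcomp_cat sumn_nseqLf fcomp_nseqLf; last first.
  rewrite size_takel //; lia.
congr (_ ++ _); rewrite fcomp_cons nl_caret /caret subst_Nd fcomp_nseqLf; last first.
  rewrite size_takel // size_drop; lia.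
rewrite fcomp_nseqLf drop_drop (addnC d) //; rewrite size_drop; lia.
Qed.

Lemma graft_comm d t i j : 0 < d -> i < j -> j < nl t ->
  graft0 d (graft0 d t j) i = graft0 d (graft0 d t i) (j + d - 1).
Proof.
move=> Hd Hij Hj.
have Hi : i < nl t by lia.
set n := nl t in Hi Hj *.
have nj : nl (graft0 d t j) = n + d - 1 := @nl_graft d t j Hj.
have ni : nl (graft0 d t i) = n + d - 1 := @nl_graft d t i Hi.
rewrite (@graft_subst d (graft0 d t j) i); last by rewrite nj; lia.
rewrite (@graft_subst d (graft0 d t i) (j + d - 1)); last by rewrite ni; lia.
rewrite nj ni (@graft_subst d t j Hj) (@graft_subst d t i Hi).
rewrite subst_assoc; last 2 first.
- by rewrite size_stepF.
- rewrite size_stepF ?sumn_stepF //; lia.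
rewrite subst_assoc; last 2 first.
- by rewrite size_stepF.
- rewrite size_stepF ?sumn_stepF //; lia.
congr subst.
rewrite fcomp_stepF; [|done|done|rewrite size_stepF; lia].
rewrite fcomp_stepF; [|done|done|rewrite size_stepF; lia].
have EX : stepF d (n + d - 1) i = (nseq i Lf ++ caret d :: nseq (j - i - 1) Lf) ++ nseq (n + d - 1 - j) Lf.
  by rewrite /stepF -catA /= -nseqD; congr (_ ++ _ :: nseq _ _); lia.
have EY : stepF d (n + d - 1) (j + d - 1) =
   nseq i Lf ++ nseq d Lf ++ nseq (j - i - 1) Lf ++ caret d :: nseq (n - j - 1) Lf.
  rewrite /stepF catA catA -!nseqD; congr (nseq _ _ ++ _ :: nseq _ _); lia.
have sz : size (nseq i Lf ++ caret d :: nseq (j - i - 1) Lf) = j.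
  rewrite size_cat /= !size_nseq; lia.
rewrite EX EY [j + d]addnC -[drop (d + j) _]drop_drop (take_size_cat _ sz) (drop_size_cat _ sz).
rewrite take_nseq; last by lia.
rewrite drop_nseq [i + d]addnC -[drop (d + i) _]drop_drop.
rewrite (take_size_cat _ (size_nseq i Lf)) (drop_size_cat _ (size_nseq i Lf)).
rewrite (take_size_cat _ (size_nseq d Lf)) (drop_size_cat _ (size_nseq d Lf)).
rewrite -catA cat_cons /caret.
congr (_ ++ _ :: _ ++ _ :: nseq _ _); lia.
Qed.

Definition Rp d (T U T' U' : tree) := dary d T /\ dary d U /\ nl T = nl U /\
  exists F, all (dary d) F /\ size F = nl T /\ T' = subst T F /\ U' = subst U F.

Lemma all_fcomp d F G : all (dary d) F -> all (dary d) G -> all (dary d) (fcomp F G).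
Proof.
elim: F G => [|c F IH] G //= /andP[dc dF] dG.
move: dG; rewrite -{1}(cat_take_drop (nl c) G) all_cat => /andP[d1 d2].
by rewrite dary_subst // IH.
Qed.

Lemma R_refl d T U : dary d T -> dary d U -> nl T = nl U -> Rp d T U T U.
Proof.
move=> dT dU E; do 3! split => //; exists (nseq (nl T) Lf).
split; first exact: all_nseqLf.
split; first exact: size_nseq.
by rewrite subst_id E subst_id.
Qed.

Lemma R_valid d T U T' U' : Rp d T U T' U' -> dary d T' /\ dary d U' /\ nl T' = nl U'.
Proof.
move=> [dT [dU [E [F [dF [sF [-> ->]]]]]]].
by rewrite !dary_subst // !nl_subst // -E.
Qed.

Lemma R_trans d T U T' U' T'' U'' : Rp d T U T' U' -> Rp d T' U' T'' U'' -> Rp d T U T'' U''.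
Proof.
move=> [dT [dU [E [F [dF [sF [E1 E2]]]]]]] [_ [_ [_ [G [dG [sG [E3 E4]]]]]]].
do 3! split => //; exists (fcomp F G); rewrite all_fcomp // size_fcomp sF.
have sG' : size G = sumn (map nl F) by rewrite sG E1 nl_subst.
by rewrite -!subst_assoc // -?E1 -?E2 // -E.
Qed.

Lemma R_conf d T U T1 U1 T2 U2 : Rp d T U T1 U1 -> Rp d T U T2 U2 ->
  exists T3 U3, Rp d T1 U1 T3 U3 /\ Rp d T2 U2 T3 U3.
Proof.
move=> R1 R2; have [dT1 [dU1 E1]] := R_valid R1; have [dT2 [dU2 E2]] := R_valid R2.
move: R1 R2 dT1 dU1 E1 dT2 dU2 E2 => [dT [dU [E [F1 [dF1 [sF1 [-> ->]]]]]]] [_ [_ [_ [F2 [dF2 [sF2 [-> ->]]]]]]] dT1 dU1 E1 dT2 dU2 E2.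
have [G1 [G2 [A1 [A2 [S1 [S2 EG]]]]]] := CRl_all dF1 dF2 (etrans sF1 (esym sF2)).
exists (subst T (fcomp F1 G1)), (subst U (fcomp F1 G1)); split.
  do 3! split => //; exists G1; rewrite A1 nl_subst // S1; do 2! split => //.
  by rewrite !subst_assoc // -E.
do 3! split => //; exists G2; rewrite A2 nl_subst // S2; do 2! split => //.
by rewrite EG !subst_assoc // -E.
Qed.

Lemma R_step d T U k : dary d T -> dary d U -> nl T = nl U -> 0 < k <= nl T ->
  Rp d T U (expand d T k) (expand d U k).
Proof.
move=> dT dU E /andP[k0 kn]; have Hk : k.-1 < nl T by lia.
do 3! split => //; exists (stepF d (nl T) k.-1).
rewrite all_stepF size_stepF //; do 2! split => //.
by rewrite /expand !graft_subst -?E.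
Qed.

Fixpoint tsize (t : tree) : nat :=
  match t with Lf => 0
  | Nd cs => (fix go (l : seq tree) : nat := match l with nil => 1 | c :: r => tsize c + go r end) cs
  end.

Lemma tsize_Nd cs : tsize (Nd cs) = (sumn (map tsize cs)).+1.
Proof. elim: cs => [//|c r IH] /=; by rewrite -addnS -IH. Qed.

Lemma sumn_map_cons (f : tree -> nat) x l : sumn (map f (x :: l)) = f x + sumn (map f l).
Proof. by []. Qed.

Definition isLf t := if t is Lf then true else false.

Lemma R_pequiv_aux d : 0 < d -> forall k F T U, sumn (map tsize F) < k ->
  dary d T -> dary d U -> nl T = nl U -> all (dary d) F -> size F = nl T ->
  pequiv d (T, U) (subst T F, subst U F).
Proof.
move=> Hd; elim=> [//|k IH] F T U Hk dT dU E dF sF.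
case: (boolP (all isLf F)) => HL.
  have -> : F = nseq (nl T) Lf.
    rewrite -sF; elim: F HL {sF dF Hk} => [|[|cs] F IHF] //= H.
    by rewrite -IHF.
  rewrite subst_id E subst_id; apply: pequiv_refl; by split.
move: HL; rewrite -has_predC => HL.
set i := find (predC isLf) F.
have Hi : i < size F by rewrite -has_find.
have Hni : ~~ isLf (nth Lf F i) by have := nth_find Lf HL.
case En : (nth Lf F i) Hni => [//|cs] _.
have dcs : dary d (Nd cs) by rewrite -En; apply: (all_nthP Lf dF).
move: (dcs); rewrite dary_Nd => /andP[/eqP scs dcsa].
have EF : F = take i F ++ Nd cs :: drop i.+1 F by rewrite -En -drop_nth ?cat_take_drop.
set F' := take i F ++ cs ++ drop i.+1 F.
have sF' : size F' = nl T + d - 1.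
  rewrite /F' !size_cat size_takel ?size_drop; lia.
have Hfc : fcomp (stepF d (nl T) i) F' = F.
  rewrite fcomp_stepF //; last by rewrite -sF.
  have si : size (take i F) = i by rewrite size_takel // ltnW.
  rewrite /F' (take_size_cat _ si) (drop_size_cat _ si) [i + d]addnC -drop_drop (drop_size_cat _ si).
  rewrite (take_size_cat _ scs) (drop_size_cat _ scs); exact: esym.
have Hi' : i < nl T by rewrite -sF.
have Hstep := @pequiv_step d T U i.+1 (conj dT (conj dU E)).
apply: pequiv_trans; first by apply: Hstep; lia.
rewrite -Hfc -!subst_assoc; first last.
- by rewrite sumn_stepF // -sF'.
- by rewrite size_stepF // -E.
- by rewrite sumn_stepF // -sF'.
- by rewrite size_stepF.
have GU : graft0 d U i = subst U (stepF d (nl T) i) by rewrite E; apply: graft_subst; rewrite -E.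
rewrite /expand /= -GU -graft_subst //.
apply: IH.
- move: Hk; rewrite {1}EF /F' !map_cat !sumn_cat sumn_map_cons tsize_Nd; lia.
- exact: dary_graft.
- apply: dary_graft; by rewrite -?E.
- by rewrite !nl_graft -?E.
- move: dF; rewrite EF /F' !all_cat /= => /andP[-> /andP[_ ->]]; by rewrite dcsa.
- by rewrite nl_graft.
Qed.

Lemma R_pequiv d T U T' U' : 0 < d -> Rp d T U T' U' -> pequiv d (T, U) (T', U').
Proof.
move=> Hd [dT [dU [E [F [dF [sF [-> ->]]]]]]].
exact: (R_pequiv_aux Hd (k := (sumn (map tsize F)).+1)).
Qed.

Definition joinable d (p q : tree * tree) :=
  exists T U, Rp d p.1 p.2 T U /\ Rp d q.1 q.2 T U.

Lemma pequiv_join d p q : pequiv d p q -> joinable d p q.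
Proof.
elim=> {p q} [[T U] [/= dT [dU E]] | T U k [/= dT [dU E]] Hk | p q _ [T [U [H1 H2]]] |
  p q r _ [T1 [U1 [H1 H2]]] _ [T2 [U2 [H3 H4]]]].
- by exists T, U; split; apply: R_refl.
- have R := R_step dT dU E Hk.
  have [a [b c]] := R_valid R.
  by exists (expand d T k), (expand d U k); split => //; apply: R_refl.
- by exists T, U.
- have [T3 [U3 [H5 H6]]] := R_conf H2 H3.
  by exists T3, U3; split; apply: R_trans; eauto.
Qed.

Lemma join_pequiv d p q : 0 < d -> joinable d p q -> pequiv d p q.
Proof.
case: p q => [a b] [c e] Hd [T [U [H1 H2]]].
apply: pequiv_trans (R_pequiv Hd H1) _; apply: pequiv_sym; exact: R_pequiv Hd H2.
Qed.

Lemma mul_wd d X Y Z X' Y' Z' : 0 < d ->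
  pequiv d (X, Y) (X', Y') -> pequiv d (Y, Z) (Y', Z') -> pequiv d (X, Z) (X', Z').
Proof.
move=> Hd /pequiv_join [T1 [U1 [R1 R1']]] /pequiv_join [T2 [U2 [R2 R2']]].
move: R1 R1' R2 R2' => /= [dX [dY [EXY [F1 [dF1 [sF1 [eT1 eU1]]]]]]]
  [dX' [dY' [EXY' [F1' [dF1' [sF1' [eT1' eU1']]]]]]]
  [_ [dZ [EYZ [F2 [dF2 [sF2 [eT2 eU2]]]]]]]
  [_ [dZ' [EYZ' [F2' [dF2' [sF2' [eT2' eU2']]]]]]].
have hX : subst X F1 = subst X' F1' by rewrite -eT1 -eT1'.
have hY1 : subst Y F1 = subst Y' F1' by rewrite -eU1 -eU1'.
have hY2 : subst Y F2 = subst Y' F2' by rewrite -eT2 -eT2'.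
have hZ : subst Z F2 = subst Z' F2' by rewrite -eU2 -eU2'.
have sF1y : size F1 = nl Y by rewrite sF1.
have sF1y' : size F1' = nl Y' by rewrite sF1'.
have [G1 [G2 [A1 [A2 [S1 [S2 EG]]]]]] := CRl_all dF1 dF2 (etrans sF1y (esym sF2)).
have S1' : size G1 = sumn (map nl F1').
  by rewrite S1 -(nl_subst sF1y) -(nl_subst sF1y') hY1.
have S2' : size G2 = sumn (map nl F2').
  by rewrite S2 -(nl_subst sF2) -(nl_subst sF2') hY2.
have EK : fcomp F1' G1 = fcomp F2' G2.
  apply: (@subst_inj Y' (fcomp F1' G1) (fcomp F2' G2)); rewrite ?size_fcomp //.
  rewrite -(subst_assoc sF1y' S1') -(subst_assoc sF2' S2') -hY1 -hY2.
  by rewrite (subst_assoc sF1y S1) (subst_assoc sF2 S2) EG.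
apply: (join_pequiv Hd).
exists (subst X (fcomp F1 G1)), (subst Z (fcomp F1 G1)); split.
  do 3! split => //=; first by rewrite EXY.
  exists (fcomp F1 G1); rewrite all_fcomp // size_fcomp; do 3! split => //.
do 3! split => //=; first by rewrite EXY'.
exists (fcomp F1' G1); rewrite all_fcomp // size_fcomp; do 3! split => //.
  by rewrite -(subst_assoc sF1 S1) -(subst_assoc sF1' S1') hX.
have sF2Z : size F2 = nl Z by rewrite sF2 EYZ.
have sF2Z' : size F2' = nl Z' by rewrite sF2' EYZ'.
by rewrite EK EG -(subst_assoc sF2Z S2) -(subst_assoc sF2Z' S2') hZ.
Qed.

Lemma ident d X T : 0 < d -> dary d X -> dary d T -> pequiv d (X, X) (T, T).
Proof.
move=> Hd dX dT; have [H1 [H2 [A1 [A2 [S1 [S2 E]]]]]] := CR_all dX dT.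
apply: (join_pequiv Hd); exists (subst X H1), (subst X H1); split.
  by do 3! split => //; exists H1.
by do 3! split => //; exists H2; rewrite E.
Qed.

Lemma treeA_shift d T k m : treeA d (expand d T k) k m = treeA d T k m.+1.
Proof. by elim: m => //= m ->. Qed.

Lemma treeA_prop d T k m : 0 < d -> 0 < k <= nl T -> dary d T ->
  dary d (treeA d T k m) /\ nl (treeA d T k m) = nl T + m * (d - 1).
Proof.
move=> Hd Hk dT; elim: m => [|m [IH1 IH2]] /=; first by rewrite mul0n addn0.
have H : k.-1 < nl (treeA d T k m) by rewrite IH2; move: (m * (d - 1)) => x; lia.
rewrite /expand dary_graft // nl_graft // IH2 mulSn; split => //; move: (m * (d - 1)) => x; lia.
Qed.

Lemma treeB_prop d T l m : 0 < d -> 0 < l <= nl T -> dary d T ->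
  dary d (treeB d T l m) /\ nl (treeB d T l m) = nl T + m * (d - 1).
Proof.
move=> Hd Hk dT; elim: m => [|m [IH1 IH2]] /=; first by rewrite mul0n addn0.
have H : (l + m * (d - 1)).-1 < nl (treeB d T l m) by rewrite IH2; move: (m * (d - 1)) => x; lia.
rewrite /expand dary_graft // nl_graft // IH2 mulSn; split => //; move: (m * (d - 1)) => x; lia.
Qed.

Lemma Y0_eq d T k l m : 0 < d -> 0 < k -> k < l -> l <= nl T -> dary d T ->
  treeA d (expand d T l) k m = expand d (treeA d T k m) (l + m * (d - 1)).
Proof.
move=> Hd Hk Hkl Hl dT; elim: m => [|m IH] /=; first by rewrite mul0n addn0.
rewrite IH.
have Hk2 : 0 < k <= nl T by lia.
have [_ nA] := @treeA_prop d T k m Hd Hk2 dT.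
rewrite /expand graft_comm //; try (rewrite ?nA; move: (m * (d - 1)) => x; lia).
congr graft0; rewrite mulSn; move: (m * (d - 1)) => x; lia.
Qed.

Lemma steps_A d P Q k m : 0 < d -> dary d P -> dary d Q -> nl P = nl Q -> 0 < k <= nl P ->
  pequiv d (P, Q) (treeA d P k m, treeA d Q k m).
Proof.
move=> Hd dP dQ E Hk; elim: m => [|m IH] /=.
  by apply: pequiv_refl.
apply: pequiv_trans IH _.
have [dA nA] := treeA_prop m Hd Hk dP.
have Hk' : 0 < k <= nl Q by rewrite -E.
have [dB nB] := treeA_prop m Hd Hk' dQ.
apply: pequiv_step; first by split => //=; rewrite nA nB E.
rewrite nA; move: (m * (d - 1)) => x; lia.
Qed.
Unset Implicit Arguments.

Theorem mainTheorem7 (d : nat) (T : tree) (k l m : nat) :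
  2 <= d -> dary d T -> 1 <= k -> k < l -> l <= nleaves T ->
  Fd_eq (Fd_pow d (cls d (expand d T k) (expand d T l)) m)
        (cls d (treeA d T k m) (treeB d T l m)).
Proof.
move=> H2 dT Hk Hkl Hl.
have Hd : 0 < d by lia.
have Hkn : 0 < k <= nl T by lia.
have Hln : 0 < l <= nl T by lia.
have dTk : dary d (expand d T k) by apply: dary_graft; lia.
have dTl : dary d (expand d T l) by apply: dary_graft; lia.
have nTk : nl (expand d T k) = nl T + d - 1 by apply: nl_graft; lia.
have nTl : nl (expand d T l) = nl T + d - 1 by apply: nl_graft; lia.
elim: m => [|m IH] p /=.
  split.
    move=> [X [dX Hp]]; apply: pequiv_trans Hp _; exact: ident.
  by move=> Hp; exists T.
have [dA nA] := treeA_prop m Hd Hkn dT.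
have [dB nB] := treeB_prop m Hd Hln dT.
set A := treeA d T k m in dA nA IH *.
set B := treeB d T l m in dB nB IH *.
set pos := l + m * (d - 1).
have Hpos : 0 < pos <= nl A by rewrite nA /pos; move: (m * (d - 1)) => x; lia.
have E1 : pequiv d (expand d T k, expand d T l)
                   (treeA d T k m.+1, expand d A pos).
  rewrite -treeA_shift /A /pos -Y0_eq //; try lia.
  apply: steps_A => //; first by rewrite nTk nTl.
  rewrite nTk; lia.
have E2 : pequiv d (A, B) (expand d A pos, expand d B pos).
  apply: pequiv_step => //; split => //=; by rewrite nA nB.
split.
  move=> [X [Y [Z [Hxy [Hyz Hp]]]]].
  have Hyz' : pequiv d (Y, Z) (A, B) by apply/IH.
  apply: pequiv_trans Hp _.
  apply: mul_wd Hd (pequiv_trans Hxy E1) (pequiv_trans Hyz' E2).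
move=> Hp; exists (treeA d T k m.+1), (expand d A pos), (expand d B pos); split.
  exact: pequiv_sym E1.
split => //.
apply/IH; exact: pequiv_sym E2.
Qed.
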